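(* Let $S$ and $T$ be monoids. Then $S\times T$ is finitely right equated if and only if both $S$ and $T$ are finitely right equated.
   Context: For a semigroup $S$ and $a\in S$, $\mathbf{r}_S(a)=\{(s,t)\in S\times S\mid as=at\}$; $S$ is finitely right equated if each $\mathbf{r}_S(a)$ is finitely generated as a right congruence (the smallest right congruence containing some finite set). *)

(* Defs.v *)
From Stdlib Require Import List.
Import ListNotations.

Record Monoid := {
  carrier :> Type;
  mul : carrier -> carrier -> carrier;
  one : carrier;
  mul_assoc : forall x y z, mul x (mul y z) = mul (mul x y) z;
  mul_1l : forall x, mul one x = x;
  mul_1r : forall x, mul x one = x
}.

Arguments mul {m} _ _.
Arguments one {m}.

Definition prod_monoid (S T : Monoid) : Monoid.
Proof.
  refine {| carrier := (carrier S * carrier T)%type;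
            mul := fun p q => (mul (fst p) (fst q), mul (snd p) (snd q));
            one := (one, one) |}.
  - intros [] [] []; simpl; rewrite !mul_assoc; reflexivity.
  - intros []; simpl; rewrite !mul_1l; reflexivity.
  - intros []; simpl; rewrite !mul_1r; reflexivity.
Defined.

Definition right_congruence (S : Monoid) (rho : S -> S -> Prop) : Prop :=
  (forall s, rho s s) /\
  (forall s t, rho s t -> rho t s) /\
  (forall s t u, rho s t -> rho t u -> rho s u) /\
  (forall s t u, rho s t -> rho (mul s u) (mul t u)).

Definition gen_right_congruence (S : Monoid) (X : (S * S)%type -> Prop) (s t : S) : Prop :=
  forall rho, right_congruence S rho -> (forall p, X p -> rho (fst p) (snd p)) -> rho s t.

Definition fg_right_congruence (S : Monoid) (rho : S -> S -> Prop) : Prop :=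
  exists X : list (S * S)%type,
    forall s t, rho s t <-> gen_right_congruence S (fun p => In p X) s t.

Definition r_ann (S : Monoid) (a : S) (s t : S) : Prop := mul a s = mul a t.

Definition finitely_right_equated (S : Monoid) : Prop :=
  forall a : S, fg_right_congruence S (r_ann S a).

(* Main.v *)
Require Import Defs.
From Stdlib Require Import List.
Import ListNotations.

Inductive cl (S : Monoid) (X : (S * S)%type -> Prop) : S -> S -> Prop :=
| cl_base p : X p -> cl S X (fst p) (snd p)
| cl_refl s : cl S X s s
| cl_sym s t : cl S X s t -> cl S X t s
| cl_trans s t u : cl S X s t -> cl S X t u -> cl S X s u
| cl_mul s t u : cl S X s t -> cl S X (mul s u) (mul t u).

Lemma cl_rc (S : Monoid) X : right_congruence S (cl S X).
Proof. repeat split; eauto using cl. Qed.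

Lemma gen_iff (S : Monoid) X (s t : S) : gen_right_congruence S X s t <-> cl S X s t.
Proof.
  split.
  - intro H. apply H. apply cl_rc. intros p Hp. now apply cl_base.
  - intros H rho [Hr [Hs [Ht Hm]]] HX. induction H; eauto.
Qed.

Lemma cl_mul' (S : Monoid) X (s t u s' t' : S) : cl S X s t -> mul s u = s' -> mul t u = t' -> cl S X s' t'.
Proof. intros H <- <-. now apply cl_mul. Qed.

Lemma cl_incl (S : Monoid) X (rho : S -> S -> Prop) s t :
  right_congruence S rho -> (forall p, X p -> rho (fst p) (snd p)) -> cl S X s t -> rho s t.
Proof. intros [Hr [Hs [Ht Hm]]] HX H; induction H; eauto. Qed.

Lemma r_ann_rc (S : Monoid) (a : S) : right_congruence S (r_ann S a).
Proof.
  unfold r_ann; repeat split; intros.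
  - congruence.
  - congruence.
  - rewrite !mul_assoc. congruence.
Qed.

Section Dir1.
Variables S T : Monoid.

Lemma projS (Z : list ((prod_monoid S T) * (prod_monoid S T))%type) p q :
  cl (prod_monoid S T) (fun p => In p Z) p q ->
  cl S (fun p => In p (map (fun z => (fst (fst z), fst (snd z))) Z)) (fst p) (fst q).
Proof.
  induction 1; eauto using cl.
  - apply (cl_base S _ (fst (fst p), fst (snd p))). apply in_map_iff. eauto.
  - destruct s, t, u. exact (cl_mul _ _ _ _ _ IHcl).
Qed.

Lemma projT (Z : list ((prod_monoid S T) * (prod_monoid S T))%type) p q :
  cl (prod_monoid S T) (fun p => In p Z) p q ->
  cl T (fun p => In p (map (fun z => (snd (fst z), snd (snd z))) Z)) (snd p) (snd q).
Proof.
  induction 1; eauto using cl.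
  - apply (cl_base T _ (snd (fst p), snd (snd p))). apply in_map_iff. eauto.
  - destruct s, t, u. exact (cl_mul _ _ _ _ _ IHcl).
Qed.

Definition ZZ (lx : list (S * S)%type) (ly : list (T * T)%type)
  : list ((prod_monoid S T) * (prod_monoid S T))%type :=
  map (fun p => (((fst p, one) : prod_monoid S T), ((snd p, one) : prod_monoid S T))) lx ++
  map (fun p => (((one, fst p) : prod_monoid S T), ((one, snd p) : prod_monoid S T))) ly.

Lemma liftS lx ly s s' : cl S (fun p => In p lx) s s' ->
  forall t, cl (prod_monoid S T) (fun p => In p (ZZ lx ly)) ((s, t) : prod_monoid S T) (s', t).
Proof.
  induction 1; intro t0; eauto using cl.
  - apply (cl_mul' _ _ ((fst p, one) : prod_monoid S T) ((snd p, one) : prod_monoid S T) ((one, t0) : prod_monoid S T)).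
    + apply (cl_base _ _ (((fst p, one) : prod_monoid S T), ((snd p, one) : prod_monoid S T))).
      unfold ZZ. apply in_or_app. left. apply in_map_iff. eauto.
    + cbn. now rewrite mul_1r, mul_1l.
    + cbn. now rewrite mul_1r, mul_1l.
  - apply (cl_mul' _ _ ((s, t0) : prod_monoid S T) ((t, t0) : prod_monoid S T) ((u, one) : prod_monoid S T)); auto;
      cbn; now rewrite mul_1r.
Qed.

Lemma liftT lx ly t t' : cl T (fun p => In p ly) t t' ->
  forall s, cl (prod_monoid S T) (fun p => In p (ZZ lx ly)) ((s, t) : prod_monoid S T) (s, t').
Proof.
  induction 1; intro t0; eauto using cl.
  - apply (cl_mul' _ _ ((one, fst p) : prod_monoid S T) ((one, snd p) : prod_monoid S T) ((t0, one) : prod_monoid S T)).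
    + apply (cl_base _ _ (((one, fst p) : prod_monoid S T), ((one, snd p) : prod_monoid S T))).
      unfold ZZ. apply in_or_app. right. apply in_map_iff. eauto.
    + cbn. now rewrite mul_1r, mul_1l.
    + cbn. now rewrite mul_1r, mul_1l.
  - apply (cl_mul' _ _ ((t0, s) : prod_monoid S T) ((t0, t) : prod_monoid S T) ((one, u) : prod_monoid S T)); auto;
      cbn; now rewrite mul_1r.
Qed.
End Dir1.

Theorem mainTheorem8 (S T : Monoid) :
  finitely_right_equated (prod_monoid S T) <->
  (finitely_right_equated S /\ finitely_right_equated T).
Proof.
  unfold finitely_right_equated, fg_right_congruence. split.
  - intro H. split.
    + intro a. destruct (H ((a, one) : prod_monoid S T)) as [Z HZ].
      exists (map (fun z => (fst (fst z), fst (snd z))) Z). intros s t.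
      rewrite gen_iff. split.
      * intro Hst. assert (Hp : r_ann (prod_monoid S T) (a, one) (s, one) (t, one)).
        { unfold r_ann. cbn. unfold r_ann in Hst. now rewrite Hst. }
        apply HZ, gen_iff in Hp. exact (projS S T Z _ _ Hp).
      * apply cl_incl. apply r_ann_rc. intros p Hp.
        apply in_map_iff in Hp. destruct Hp as [z [<- Hz]].
        assert (Hr : r_ann (prod_monoid S T) (a, one) (fst z) (snd z)).
        { apply HZ. apply gen_iff. now apply (cl_base (prod_monoid S T) _ z). }
        unfold r_ann in *. destruct z as [[] []]. cbn in *. congruence.
    + intro a. destruct (H ((one, a) : prod_monoid S T)) as [Z HZ].
      exists (map (fun z => (snd (fst z), snd (snd z))) Z). intros s t.
      rewrite gen_iff. split.
      * intro Hst. assert (Hp : r_ann (prod_monoid S T) (one, a) (one, s) (one, t)).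
        { unfold r_ann. cbn. unfold r_ann in Hst. now rewrite Hst. }
        apply HZ, gen_iff in Hp. exact (projT S T Z _ _ Hp).
      * apply cl_incl. apply r_ann_rc. intros p Hp.
        apply in_map_iff in Hp. destruct Hp as [z [<- Hz]].
        assert (Hr : r_ann (prod_monoid S T) (one, a) (fst z) (snd z)).
        { apply HZ. apply gen_iff. now apply (cl_base (prod_monoid S T) _ z). }
        unfold r_ann in *. destruct z as [[] []]. cbn in *. congruence.
  - intros [HS HT] [a b].
    destruct (HS a) as [lx Hx]. destruct (HT b) as [ly Hy].
    exists (ZZ S T lx ly). intros [s1 t1] [s2 t2]. rewrite gen_iff. split.
    + intro H. unfold r_ann in H. cbn in H. injection H as H1 H2.
      assert (C1 : cl S (fun p => In p lx) s1 s2) by (apply gen_iff, Hx; exact H1).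
      assert (C2 : cl T (fun p => In p ly) t1 t2) by (apply gen_iff, Hy; exact H2).
      eapply cl_trans. apply (liftS S T lx ly _ _ C1 t1). apply (liftT S T lx ly _ _ C2 s2).
    + apply cl_incl. apply r_ann_rc. intros p Hp. unfold ZZ in Hp.
      apply in_app_or in Hp. destruct Hp as [Hp | Hp]; apply in_map_iff in Hp;
        destruct Hp as [q [<- Hq]]; unfold r_ann; cbn.
      * assert (Hr : r_ann S a (fst q) (snd q)) by (apply Hx, gen_iff; now apply (cl_base _ _ q)).
        unfold r_ann in Hr. now rewrite Hr.
      * assert (Hr : r_ann T b (fst q) (snd q)) by (apply Hy, gen_iff; now apply (cl_base _ _ q)).
        unfold r_ann in Hr. now rewrite Hr.
Qed.
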